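(* In the setting below, for any $\vec w=(w_1,\ldots,w_n)$ with each $w_i\in W_M^Q$, \[ \theta^M(\vec w)-\theta^H(\vec w)=\frac{1}{2(r-s)}\big(\mathrm{expdim}_G(\vec w)-\mathrm{expdim}_M(\vec w)\big). \]
   Context: Weight space with orthonormal basis $\epsilon_1,\ldots,\epsilon_r$, dual basis $\epsilon_i^*$. $G=\mathrm{Sp}(2r)$ with positive roots $\epsilon_i-\epsilon_j$ ($i<j$), $\epsilon_i+\epsilon_j$ ($i\le j$), simple roots $\alpha_i=\epsilon_i-\epsilon_{i+1}$, $\alpha_r=2\epsilon_r$. Fix $1\le k\le s<r$. $M\cong\mathrm{Sp}(2s)\times\mathrm{Sp}(2(r-s))$ is the centralizer of $\tau=\mathrm{diag}(-1,\ldots,-1,1,\ldots,1,-1,\ldots,-1)$ ($2(r-s)$ ones) with positive roots $R^+_M$ the positive roots of $G$ trivial on $\tau$. $H=\mathrm{SO}(2s+1)\times\mathrm{Sp}(2(r-s))$ with positive roots $\epsilon_i\pm\epsilon_j$ ($1\le i<j\le s$), $\epsilon_i$ ($1\le i\le s$) together with the second-factor roots of $M$. $P$ is the maximal parabolic of $G$ omitting $\alpha_k$ ($G/P\cong\mathrm{IG}(k,2r)$), $Q=M\cap P$ ($M/Q\cong\mathrm{IG}(k,2s)$), $Q^H$ the corresponding parabolic of $H$; $x_Q=\sum_{i\le k}\epsilon_i^*$; $W_M^Q$ minimal coset representatives (same for $M$ and $H$, contained in $W^P$). $\chi^M_w=\sum_{\beta\in(R^+_M\setminus R^+_L)\cap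 w^{-1}R^+_M}\beta$ and $\chi^H_w$ likewise with $R^+_H$ and the Levi of $Q^H$. $\theta^M(\vec w)=(\chi^M_1-\sum_i\chi^M_{w_i})(x_Q)$, $\theta^H(\vec w)=(\chi^H_1-\sum_i\chi^H_{w_i})(x_Q)$ ($1$ the identity element). $\mathrm{expdim}_G(\vec w)=\dim(G/P)-\sum_i\mathrm{codim}(C_{w_i})$ and $\mathrm{expdim}_M(\vec w)=\dim(M/Q)-\sum_i\mathrm{codim}(C^M_{w_i})$, where $C_w\subseteq G/P$ and $C^M_w\subseteq M/Q$ are the Schubert cells indexed by $w$. *)

(* Defs.v *)
From mathcomp Require Import all_boot all_order all_algebra.
Set Implicit Arguments. Unset Strict Implicit. Unset Printing Implicit Defensive.
Import Order.TTheory GRing.Theory Num.Theory.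
Local Open Scope ring_scope.

(* Weights: integer vectors in the basis eps_0..eps_{r-1} (0-indexed; the
   paper's eps_{i+1} is our eps i). *)
Definition weight (r : nat) := {ffun 'I_r -> int}.

Definition eps (r : nat) (i : 'I_r) : weight r := [ffun j => ((j == i) : nat)%:Z].

Definition dotw (r : nat) (a b : weight r) : int := \sum_(i < r) a i * b i.

(* Positive roots of G = Sp(2r): eps_i - eps_j (i<j), eps_i + eps_j (i<=j). *)
Definition ord_pairs (r : nat) : seq ('I_r * 'I_r) :=
  [seq (i, j) | i <- enum 'I_r, j <- enum 'I_r].

Definition posG (r : nat) : seq (weight r) :=
  [seq eps p.1 - eps p.2 | p <- [seq p : 'I_r * 'I_r <- ord_pairs r | (p.1 < p.2)%N]] ++
  [seq eps p.1 + eps p.2 | p <- [seq p : 'I_r * 'I_r <- ord_pairs r | (p.1 <= p.2)%N]].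

(* tau = diag(-1,..,-1,1,..,1,-1,..,-1): on the maximal torus its eps_i-coordinate
   is -1 for i < s and 1 for i >= s; the character beta takes the value
   prod_i tau_i ^ beta_i at tau. *)
Definition tau_coord (r s : nat) (i : 'I_r) : int := if (i < s)%N then -1 else 1.
Definition char_at_tau (r s : nat) (b : weight r) : int :=
  \prod_(i < r) (tau_coord s i) ^ (b i).

Definition posM (r s : nat) : seq (weight r) :=
  [seq b <- posG r | char_at_tau s b == 1].

Definition posH (r s : nat) : seq (weight r) :=
  [seq eps p.1 - eps p.2 | p <- [seq p : 'I_r * 'I_r <- ord_pairs r | (p.1 < p.2)%N && (p.2 < s)%N]] ++
  [seq eps p.1 + eps p.2 | p <- [seq p : 'I_r * 'I_r <- ord_pairs r | (p.1 < p.2)%N && (p.2 < s)%N]] ++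
  [seq eps i | i : 'I_r <- enum 'I_r & (i < s)%N] ++
  [seq b : weight r <- posM r s | [forall i : 'I_r, (i < s)%N ==> (b i == 0)]].

(* Pairing of a weight with x_Q = sum_{i <= k} eps_i^*  (0-indexed: i < k). *)
Definition at_xQ (r k : nat) (b : weight r) : int := \sum_(i < r | (i < k)%N) b i.

(* Positive roots of the Levi of the parabolic defined by x_Q
   (x_Q is the fundamental coweight of alpha_k, so beta(x_Q) is the
    alpha_k-coefficient of beta). *)
Definition levi (r k : nat) (R : seq (weight r)) : seq (weight r) :=
  [seq b <- R | at_xQ k b == 0].

Definition refl (r : nat) (b : weight r) (l : weight r) : weight r :=
  [ffun i => l i - ((2 * dotw l b) %/ dotw b b)%Z * b i].

Definition inWeyl (r : nat) (R : seq (weight r)) (w : weight r -> weight r) : Prop :=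
  exists l : seq (weight r), all (fun b => b \in R) l /\
    w =1 foldr (fun b f => refl b \o f) id l.

Definition lengthW (r : nat) (R : seq (weight r)) (w : weight r -> weight r) : nat :=
  count (fun b => w b \notin R) R.

Definition minRepMQ (r s k : nat) (w : weight r -> weight r) : Prop :=
  inWeyl (posM r s) w /\
  forall v, inWeyl (levi k (posM r s)) v ->
    (lengthW (posM r s) w <= lengthW (posM r s) (w \o v))%N.

Definition chiW (r : nat) (R RL : seq (weight r)) (w : weight r -> weight r) : weight r :=
  \sum_(b <- R | (b \notin RL) && (w b \in R)) b.

Definition thetaM (r s k n : nat) (ws : 'I_n -> weight r -> weight r) : int :=
  at_xQ k (chiW (posM r s) (levi k (posG r)) id
           - \sum_(i < n) chiW (posM r s) (levi k (posG r)) (ws i)).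

Definition thetaH (r s k n : nat) (ws : 'I_n -> weight r -> weight r) : int :=
  at_xQ k (chiW (posH r s) (levi k (posH r s)) id
           - \sum_(i < n) chiW (posH r s) (levi k (posH r s)) (ws i)).

(* dim G/P = #(R^+ \ R^+_L), dim M/Q = #(R^+_M \ R^+_{L_M});
   dim of Schubert cell C_w (w minimal rep) = length of w. *)
Definition dimGP (r k : nat) : int := (size (posG r))%:Z - (size (levi k (posG r)))%:Z.
Definition dimMQ (r s k : nat) : int :=
  (size (posM r s))%:Z - (size (levi k (posM r s)))%:Z.

Definition codimG (r k : nat) (w : weight r -> weight r) : int :=
  dimGP r k - (lengthW (posG r) w)%:Z.
Definition codimM (r s k : nat) (w : weight r -> weight r) : int :=
  dimMQ r s k - (lengthW (posM r s) w)%:Z.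

Definition expdimG (r k n : nat) (ws : 'I_n -> weight r -> weight r) : int :=
  dimGP r k - \sum_(i < n) codimG k (ws i).
Definition expdimM (r s k n : nat) (ws : 'I_n -> weight r -> weight r) : int :=
  dimMQ r s k - \sum_(i < n) codimM s k (ws i).

(* Main.v *)
Require Import Defs.
From mathcomp Require Import all_boot all_order all_algebra all_fingroup.
From mathcomp Require Import zify ring lra.
Set Implicit Arguments. Unset Strict Implicit. Unset Printing Implicit Defensive.
Import Order.TTheory GRing.Theory Num.Theory.
Local Open Scope ring_scope.

Definition sg (x : bool) : int := if x then -1 else 1.
Definition neps r (x : bool) (a : 'I_r) : weight r := if x then - eps a else eps a.

Lemma epsE r (i t : 'I_r) : eps i t = if t == i then 1 else 0.
Proof. by rewrite /eps ffunE; case: (t == i). Qed.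

Lemma nepsE r x (a t : 'I_r) : neps x a t = if t == a then sg x else 0.
Proof. by rewrite /neps /sg /eps; case: x => /=; rewrite !ffunE; case: (t == a). Qed.

Definition pos_lead r (b : weight r) :=
  exists i : 'I_r, 0 < b i /\ forall t : 'I_r, (t < i)%N -> b t = 0.

Lemma lead_minus r (a c : 'I_r) : (a < c)%N -> pos_lead (eps a - eps c).
Proof.
move=> ac; exists a; rewrite /eps !ffunE eqxx; split.
  by rewrite (_ : (a == c) = false) //; apply/negbTE; apply/eqP => e; rewrite e ltnn in ac.
move=> t ta; rewrite !ffunE (_ : (t == a) = false); last by apply/negbTE/eqP => e; rewrite e ltnn in ta.
rewrite (_ : (t == c) = false) //; apply/negbTE/eqP => e; rewrite e in ta; lia.
Qed.

Lemma lead_plus r (a c : 'I_r) : (a <= c)%N -> pos_lead (eps a + eps c).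
Proof.
move=> ac; exists a; rewrite /eps !ffunE eqxx; split.
  by case: (a == c).
move=> t ta; rewrite !ffunE (_ : (t == a) = false); last by apply/negbTE/eqP => e; rewrite e ltnn in ta.
rewrite (_ : (t == c) = false) //; apply/negbTE/eqP => e; rewrite e in ta; lia.
Qed.

Lemma lead_single r (a : 'I_r) : pos_lead (eps a).
Proof.
exists a; rewrite /eps !ffunE eqxx; split => // t ta.
by rewrite !ffunE (_ : (t == a) = false); last by apply/negbTE/eqP => e; rewrite e ltnn in ta.
Qed.

Lemma posG_lead r (b : weight r) : b \in posG r -> pos_lead b.
Proof.
rewrite mem_cat => /orP [] /mapP [p]; rewrite mem_filter => /andP [hp _] ->.
  exact: lead_minus.
exact: lead_plus.
Qed.

Lemma posM_lead r s (b : weight r) : b \in posM r s -> pos_lead b.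
Proof. by rewrite mem_filter => /andP [_ /posG_lead]. Qed.

Lemma posH_lead r s (b : weight r) : b \in posH r s -> pos_lead b.
Proof.
rewrite !mem_cat => /or4P [] .
- by move=> /mapP [p]; rewrite mem_filter => /andP [/andP [hp _] _] ->; exact: lead_minus.
- by move=> /mapP [p]; rewrite mem_filter => /andP [/andP [hp _] _] ->; apply: lead_plus; exact: ltnW.
- by move=> /mapP [i] _ ->; exact: lead_single.
- by rewrite mem_filter => /andP [_ /posM_lead].
Qed.

Lemma not_lead r (b : weight r) (a : 'I_r) :
  b a < 0 -> (forall t : 'I_r, (t < a)%N -> b t = 0) -> ~ pos_lead b.
Proof.
move=> ha h0 [i [hi hl]].
case: (ltngtP i a) => [ia|ai|/val_inj ia].
- by move: hi; rewrite h0.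
- by move: ha; rewrite hl.
- by subst; move: hi ha => /lt_trans H /H.
Qed.

Lemma mem_pairs r (a c : 'I_r) : (a, c) \in ord_pairs r.
Proof. by apply: (allpairs_f pair); rewrite mem_enum. Qed.

Lemma memG_minus r (a c : 'I_r) : (a < c)%N -> eps a - eps c \in posG r.
Proof.
move=> ac; rewrite mem_cat; apply/orP; left.
by apply/mapP; exists (a, c); rewrite // mem_filter ac mem_pairs.
Qed.

Lemma memG_plus r (a c : 'I_r) : (a <= c)%N -> eps a + eps c \in posG r.
Proof.
move=> ac; rewrite mem_cat; apply/orP; right.
by apply/mapP; exists (a, c); rewrite // mem_filter ac mem_pairs.
Qed.

Lemma memH_minus r s (a c : 'I_r) : (a < c)%N -> (c < s)%N -> eps a - eps c \in posH r s.
Proof.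
move=> ac cs; rewrite mem_cat; apply/orP; left.
by apply/mapP; exists (a, c); rewrite // mem_filter ac cs mem_pairs.
Qed.

Lemma memH_plus r s (a c : 'I_r) : (a < c)%N -> (c < s)%N -> eps a + eps c \in posH r s.
Proof.
move=> ac cs; rewrite !mem_cat; apply/or4P; apply: Or42.
by apply/mapP; exists (a, c); rewrite // mem_filter ac cs mem_pairs.
Qed.

Lemma memH_single r s (a : 'I_r) : (a < s)%N -> eps a \in posH r s.
Proof.
move=> as_; rewrite !mem_cat; apply/or4P; apply: Or43.
by apply/mapP; exists a; rewrite // mem_filter as_ mem_enum.
Qed.

Lemma addwE r (u v : weight r) t : (u + v) t = u t + v t.
Proof. by rewrite ffunE. Qed.
Lemma oppwE r (u : weight r) t : (- u) t = - u t.
Proof. by rewrite ffunE. Qed.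
Lemma subwE r (u v : weight r) t : (u - v) t = u t - v t.
Proof. by rewrite ffunE oppwE. Qed.
Lemma zerowE r (t : 'I_r) : (0 : weight r) t = 0.
Proof. by rewrite ffunE. Qed.

Lemma neps_neq r x (a t : 'I_r) : t != a -> neps x a t = 0.
Proof. by move/negbTE => h; rewrite nepsE h. Qed.
Lemma neps_eq r x (a : 'I_r) : neps x a a = sg x.
Proof. by rewrite nepsE eqxx. Qed.

Lemma ord_neq_lt r (t a : 'I_r) : (t < a)%N -> t != a.
Proof. by move=> h; apply/eqP => e; rewrite e ltnn in h. Qed.

Lemma memG2_lt r x y (a c : 'I_r) : (a < c)%N ->
  (neps x a + neps y c \in posG r) = ~~ x.
Proof.
move=> ac; case: x; last rewrite /=.
  apply/negbTE/negP => /posG_lead; apply: (@not_lead _ _ a).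
    by rewrite addwE neps_eq (neps_neq _ (ord_neq_lt ac)).
  move=> t ta; rewrite addwE !neps_neq ?ord_neq_lt //; lia.
case: y; rewrite /neps.
  exact: memG_minus.
exact/memG_plus/ltnW.
Qed.

Lemma memG2 r x y (a c : 'I_r) : a != c ->
  (neps x a + neps y c \in posG r) = if (a < c)%N then ~~ x else ~~ y.
Proof.
move=> ne; case: (ltngtP a c) => [ac|ca|e].
- exact: memG2_lt.
- by rewrite addrC memG2_lt.
- by move: ne; rewrite (val_inj e) eqxx.
Qed.

Lemma memG1 r x (a : 'I_r) : (neps x a + neps x a \in posG r) = ~~ x.
Proof.
case: x; last rewrite /=.
  apply/negbTE/negP => /posG_lead; apply: (@not_lead _ _ a).
    by rewrite addwE neps_eq.
  move=> t ta; rewrite addwE !neps_neq ?ord_neq_lt //.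
by apply: memG_plus.
Qed.

Lemma memH2_lt r s x y (a c : 'I_r) : (a < c)%N -> (c < s)%N ->
  (neps x a + neps y c \in posH r s) = ~~ x.
Proof.
move=> ac cs; case: x; last rewrite /=.
  apply/negbTE/negP => /posH_lead; apply: (@not_lead _ _ a).
    by rewrite addwE neps_eq (neps_neq _ (ord_neq_lt ac)).
  move=> t ta; rewrite addwE !neps_neq ?ord_neq_lt //; lia.
case: y; rewrite /neps.
  exact: memH_minus.
exact: memH_plus.
Qed.

Lemma memH2 r s x y (a c : 'I_r) : a != c -> (a < s)%N -> (c < s)%N ->
  (neps x a + neps y c \in posH r s) = if (a < c)%N then ~~ x else ~~ y.
Proof.
move=> ne as_ cs; case: (ltngtP a c) => [ac|ca|e].
- exact: memH2_lt.
- by rewrite addrC memH2_lt.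
- by move: ne; rewrite (val_inj e) eqxx.
Qed.

Lemma memH1 r s x (a : 'I_r) : (a < s)%N -> (neps x a \in posH r s) = ~~ x.
Proof.
move=> as_; case: x; last rewrite /=.
  apply/negbTE/negP => /posH_lead; apply: (@not_lead _ _ a).
    by rewrite neps_eq.
  move=> t ta; rewrite !neps_neq ?ord_neq_lt //.
exact: memH_single.
Qed.

Definition sp r (σ : {perm 'I_r}) (e : 'I_r -> bool) (l : weight r) : weight r :=
  [ffun t => sg (e ((σ^-1)%g t)) * l ((σ^-1)%g t)].

Lemma spE r (σ : {perm 'I_r}) e (l : weight r) t : sp σ e l t = sg (e ((σ^-1)%g t)) * l ((σ^-1)%g t).
Proof. by rewrite ffunE. Qed.

Lemma sp_add r (σ : {perm 'I_r}) e (u v : weight r) : sp σ e (u + v) = sp σ e u + sp σ e v.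
Proof. by apply/ffunP => t; rewrite addwE !spE addwE mulrDr. Qed.

Lemma sp_neps r (σ : {perm 'I_r}) e x (a : 'I_r) : sp σ e (neps x a) = neps (x (+) e a) (σ a).
Proof.
apply/ffunP => t; rewrite spE !nepsE.
have -> : ((σ^-1)%g t == a) = (t == σ a).
  by apply/eqP/eqP => [<-|->]; rewrite ?permKV ?permK.
case: eqP => [->|]; last by rewrite mulr0.
by rewrite permK /sg; case: x; case: (e a).
Qed.

Lemma sg_addb a b : sg (a (+) b) = sg a * sg b.
Proof. by case: a; case: b. Qed.

Lemma sp_comp r (σ1 σ2 : {perm 'I_r}) e1 e2 (l : weight r) :
  sp σ1 e1 (sp σ2 e2 l) = sp (σ2 * σ1)%g (fun u => e1 (σ2 u) (+) e2 u) l.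
Proof.
apply/ffunP => t; rewrite !spE invMg permM permKV sg_addb mulrA.
by [].
Qed.

Lemma sp_id r (l : weight r) : sp 1%g (fun _ => false) l = l.
Proof. by apply/ffunP => t; rewrite spE invg1 perm1 mul1r. Qed.

Lemma dotwD r (l u v : weight r) : dotw l (u + v) = dotw l u + dotw l v.
Proof. by rewrite /dotw -big_split; apply: eq_bigr => i _; rewrite addwE mulrDr. Qed.

Lemma dotw_neps r (l : weight r) x a : dotw l (neps x a) = sg x * l a.
Proof.
rewrite /dotw (bigD1 a) // neps_eq big1 => [|i ia]; last by rewrite neps_neq // mulr0.
by rewrite /= addr0 mulrC.
Qed.

Definition good r s (σ : {perm 'I_r}) := forall i, (σ i < s)%N = (i < s)%N.

Lemma good1 r s : good s (1%g : {perm 'I_r}).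
Proof. by move=> i; rewrite perm1. Qed.

Lemma goodM r s (σ1 σ2 : {perm 'I_r}) : good s σ1 -> good s σ2 -> good s (σ1 * σ2)%g.
Proof. by move=> h1 h2 i; rewrite permM h2 h1. Qed.

Lemma good_tperm r s (a c : 'I_r) : (a < s)%N = (c < s)%N -> good s (tperm a c).
Proof. by move=> h i; case: tpermP => [->|->|]. Qed.

Lemma refl_pair r x (a c : 'I_r) (l : weight r) : a != c ->
  refl (neps false a + neps x c) l = sp (tperm a c) (fun u => ~~ x && ((u == a) || (u == c))) l.
Proof.
move=> ac; set b := neps false a + neps x c.
have ba : b a = 1.
  by rewrite /b addwE neps_eq neps_neq.
have bc : b c = sg x.
  by rewrite /b addwE neps_eq neps_neq; [rewrite add0r | rewrite eq_sym].
have bt : forall t, t != a -> t != c -> b t = 0.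
  by move=> t ta tc; rewrite /b addwE !neps_neq.
have dl : dotw l b = l a + sg x * l c by rewrite /b dotwD !dotw_neps /sg mul1r.
have db : dotw b b = 2 by rewrite /b dotwD !dotw_neps ba bc /sg; case: (x).
have ac' : (a == c) = false by apply/negbTE.
have ca' : (c == a) = false by rewrite eq_sym.
apply/ffunP => t; rewrite ffunE spE tpermV dl db mulKz //.
case: tpermP => [->|->|ta tc].
- by rewrite ?ba ?bc !eqxx ?ac' ?ca' /sg; case: (x) => /=; ring.
- by rewrite ?ba ?bc !eqxx ?ac' ?ca' /sg; case: (x) => /=; ring.
- have ta' : t != a by apply/eqP.
  have tc' : t != c by apply/eqP.
  rewrite bt // (negbTE ta') (negbTE tc') andbF /sg.
  ring.
Qed.

Lemma refl_diag r (a : 'I_r) (l : weight r) :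
  refl (neps false a + neps false a) l = sp 1%g (fun u => u == a) l.
Proof.
set b := neps false a + neps false a.
have ba : b a = 2 by rewrite /b addwE neps_eq.
have bt : forall t, t != a -> b t = 0.
  by move=> t ta; rewrite /b addwE !neps_neq.
have dl : dotw l b = 2 * l a by rewrite /b dotwD !dotw_neps /sg mul1r; ring.
have db : dotw b b = 4 by rewrite /b dotwD !dotw_neps ba.
apply/ffunP => t; rewrite ffunE spE invg1 perm1 dl db.
rewrite (_ : 2 * (2 * l a) = 4 * l a); last ring.
rewrite mulKz //.
case: (eqVneq t a) => [->|ta].
  by rewrite ba /sg; ring.
by rewrite bt // /sg mulr0 subr0 mul1r.
Qed.

Lemma tau_unit r s (i : 'I_r) : tau_coord s i \is a GRing.unit.
Proof. by rewrite /tau_coord; case: ifP => _; rewrite ?unitrN1 ?unitr1. Qed.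

Lemma tau_inv r s (i : 'I_r) : (tau_coord s i)^-1 = tau_coord s i.
Proof. by rewrite /tau_coord; case: ifP => _; rewrite ?invrN1 ?invr1. Qed.

Lemma charD r s (u v : weight r) : char_at_tau s (u + v) = char_at_tau s u * char_at_tau s v.
Proof.
rewrite /char_at_tau -big_split; apply: eq_bigr => i _.
by rewrite addwE exprzDr // tau_unit.
Qed.

Lemma charN r s (u : weight r) : char_at_tau s (- u) = char_at_tau s u.
Proof.
rewrite /char_at_tau; apply: eq_bigr => i _.
by rewrite oppwE -exprz_inv tau_inv.
Qed.

Lemma char_eps r s (a : 'I_r) : char_at_tau s (neps false a) = tau_coord s a.
Proof.
rewrite /char_at_tau (bigD1 a) // neps_eq big1 => [|i ia]; last by rewrite neps_neq.
by rewrite /= mulr1.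
Qed.

Lemma char_neps r s x (a : 'I_r) : char_at_tau s (neps x a) = tau_coord s a.
Proof. by case: x; rewrite -?char_eps // /neps charN. Qed.

Lemma char2 r s x y (a c : 'I_r) :
  (char_at_tau s (neps x a + neps y c) == 1) = ((a < s)%N == (c < s)%N).
Proof.
by rewrite charD !char_neps /tau_coord; case: (a < s)%N; case: (c < s)%N.
Qed.

Lemma posM_cases r s (b : weight r) : b \in posM r s ->
  (exists (a c : 'I_r) (x : bool), [/\ (a < c)%N, (a < s)%N = (c < s)%N & b = neps false a + neps x c])
  \/ (exists a : 'I_r, b = neps false a + neps false a).
Proof.
rewrite mem_filter => /andP [hc]; rewrite mem_cat => /orP [] /mapP [[a c]];
  rewrite mem_filter /= => /andP [hp _] hb; subst b.
- left; exists a, c, true; split => //.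
  by move: hc; rewrite (char2 s false true a c) => /eqP.
- case: (ltngtP a c) hp => // [ac _|/val_inj e _].
    left; exists a, c, false; split => //.
    by move: hc; rewrite (char2 s false false a c) => /eqP.
  by right; exists a; rewrite e.
Qed.

Lemma refl_posM r s (b : weight r) : b \in posM r s ->
  exists τ g, good s τ /\ forall l, refl b l = sp τ g l.
Proof.
case/posM_cases => [[a [c [x [ac hs ->]]]]|[a ->]].
  exists (tperm a c), (fun u => ~~ x && ((u == a) || (u == c))); split.
    exact: good_tperm.
  by move=> l; apply: refl_pair; apply: ord_neq_lt.
exists 1%g, (fun u => u == a); split; first exact: good1.
by move=> l; apply: refl_diag.
Qed.

Lemma inWeyl_sp r s (f : weight r -> weight r) : inWeyl (posM r s) f ->
  exists σ e, good s σ /\ f =1 sp σ e.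
Proof.
case=> l [hall hf].
suff [σ [e [hg he]]] : exists σ e, good s σ /\
    foldr (fun b f => refl b \o f) id l =1 sp σ e.
  by exists σ, e; split => // x; rewrite hf he.
elim: l hall {hf} => [|b l IH] /=.
  by move=> _; exists 1%g, (fun _ => false); split; [exact: good1 | move=> x; rewrite sp_id].
case/andP => hb /IH [σ [e [hg he]]].
case: (refl_posM hb) => [τ [g [hτ hr]]].
exists (σ * τ)%g, (fun u => g (σ u) (+) e u); split; first exact: goodM.
by move=> x /=; rewrite he hr sp_comp.
Qed.

Definition bz (b : bool) : int := if b then 1 else 0.

Lemma count_int T (P : pred T) (s : seq T) : (count P s)%:Z = \sum_(x <- s) bz (P x).
Proof.
elim: s => [|x s IH]; first by rewrite big_nil.
by rewrite /= big_cons PoszD IH /bz; case: (P x).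
Qed.

Lemma sum_pairs r (F : 'I_r * 'I_r -> int) :
  \sum_(p <- ord_pairs r) F p = \sum_(i < r) \sum_(j < r) F (i, j).
Proof.
rewrite /ord_pairs big_allpairs big_enum /=.
by apply: eq_bigr => i _; rewrite big_enum.
Qed.

Lemma sum_posG r (F : weight r -> int) :
  \sum_(b <- posG r) F b = \sum_(i < r) \sum_(j < r)
     ((if (i < j)%N then F (neps false i + neps true j) else 0) +
      (if (i <= j)%N then F (neps false i + neps false j) else 0)).
Proof.
rewrite /posG big_cat /= !big_map !big_filter big_mkcond [X in _ + X]big_mkcond !sum_pairs -big_split /=.
by apply: eq_bigr => i _; rewrite -big_split.
Qed.

Lemma sum_posM r s (F : weight r -> int) :
  \sum_(b <- posM r s) F b = \sum_(b <- posG r) (if char_at_tau s b == 1 then F b else 0).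
Proof. by rewrite /posM big_filter big_mkcond. Qed.

Definition posH4 r s := [seq b : weight r <- posM r s | [forall i : 'I_r, (i < s)%N ==> (b i == 0)]].

Lemma sum_posH r s (F : weight r -> int) :
  \sum_(b <- posH r s) F b = \sum_(i < r) \sum_(j < r)
     ((if (i < j)%N && (j < s)%N then F (neps false i + neps true j) else 0) +
      (if (i < j)%N && (j < s)%N then F (neps false i + neps false j) else 0))
  + \sum_(i < r) (if (i < s)%N then F (neps false i) else 0)
  + \sum_(b <- posH4 r s) F b.
Proof.
rewrite /posH !big_cat /= !big_map.
rewrite [X in _ + (_ + (X + _))]big_filter.
rewrite [X in X + _]big_filter [X in _ + (X + _)]big_filter.
rewrite big_mkcond [X in _ + (X + _)]big_mkcond !sum_pairs.
rewrite big_enum_cond /= [X in _ + (_ + (X + _))]big_mkcond /= !addrA; congr (_ + _ + _).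
rewrite -big_split /=; apply: eq_bigr => i _; rewrite -big_split //.
Qed.

Lemma sp_pair r (σ : {perm 'I_r}) e x (i j : 'I_r) :
  sp σ e (neps false i + neps x j) = neps (e i) (σ i) + neps (x (+) e j) (σ j).
Proof. by rewrite sp_add !sp_neps. Qed.

Lemma memG_pair r (σ : {perm 'I_r}) e x (i j : 'I_r) : i != j ->
  (sp σ e (neps false i + neps x j) \in posG r) =
  if (σ i < σ j)%N then ~~ e i else ~~ (x (+) e j).
Proof. by move=> ij; rewrite sp_pair memG2 // (inj_eq perm_inj). Qed.

Lemma memG_diag r (σ : {perm 'I_r}) e (i : 'I_r) :
  (sp σ e (neps false i + neps false i) \in posG r) = ~~ e i.
Proof. by rewrite sp_pair memG1. Qed.

Lemma memM_pair r s (σ : {perm 'I_r}) e x (i j : 'I_r) : good s σ ->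
  (sp σ e (neps false i + neps x j) \in posM r s) =
  (sp σ e (neps false i + neps x j) \in posG r) && ((i < s)%N == (j < s)%N).
Proof. by move=> hg; rewrite mem_filter andbC {2}sp_pair char2 !hg. Qed.

Lemma memH_pair r s (σ : {perm 'I_r}) e x (i j : 'I_r) : good s σ -> i != j ->
  (i < s)%N -> (j < s)%N ->
  (sp σ e (neps false i + neps x j) \in posH r s) =
  (sp σ e (neps false i + neps x j) \in posG r).
Proof.
move=> hg ij hi hj; rewrite sp_pair memH2 ?memG2 ?hg // (inj_eq perm_inj) //.
Qed.

Lemma memH_single' r s (σ : {perm 'I_r}) e (i : 'I_r) : good s σ -> (i < s)%N ->
  (sp σ e (neps false i) \in posH r s) = ~~ e i.
Proof. by move=> hg hi; rewrite sp_neps memH1 // hg. Qed.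

Lemma atD r k (u v : weight r) : at_xQ k (u + v) = at_xQ k u + at_xQ k v.
Proof. by rewrite /at_xQ -big_split; apply: eq_bigr => i _; rewrite addwE. Qed.

Lemma at_neps r k x (a : 'I_r) : at_xQ k (neps x a) = if (a < k)%N then sg x else 0.
Proof.
rewrite /at_xQ; case: ifP => ak.
  rewrite (bigD1 a) // neps_eq big1 => [|i /andP [_ ia]]; last by rewrite neps_neq.
  by rewrite /= addr0.
rewrite big1 // => i ik; rewrite neps_neq //; apply/eqP => ea; by move: ik; rewrite ea ak.
Qed.

Lemma at_pair r k x (i j : 'I_r) :
  at_xQ k (neps false i + neps x j) = bz (i < k)%N + (if (j < k)%N then sg x else 0).
Proof. by rewrite atD !at_neps /bz. Qed.

Lemma char_pair r s x (i j : 'I_r) :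
  (char_at_tau s (neps false i + neps x j) == 1) = ((i < s)%N == (j < s)%N).
Proof. exact: char2. Qed.

Lemma sumsum_sub r (A B : 'I_r -> 'I_r -> int) (X : 'I_r -> int) :
  (forall i j, A i j - B i j = if i == j then X i else 0) ->
  \sum_(i < r) \sum_(j < r) A i j - \sum_(i < r) \sum_(j < r) B i j = \sum_(i < r) X i.
Proof.
move=> h; rewrite -sumrB; apply: eq_bigr => i _; rewrite -sumrB.
rewrite (eq_bigr _ (fun j _ => h i j)) -big_mkcond /=.
by rewrite (big_pred1 i) // => j; rewrite eq_sym.
Qed.

Lemma posH4_at r s k (b : weight r) : (k <= s)%N -> b \in posH4 r s -> at_xQ k b = 0.
Proof.
move=> ks; rewrite mem_filter => /andP [/forallP h _].
rewrite /at_xQ big1 // => i ik; apply/eqP; move: (h i) => /implyP; apply.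
exact: leq_trans ik ks.
Qed.

Lemma cdiff r s k (σ : {perm 'I_r}) e : (k <= s)%N -> good s σ ->
  \sum_(b <- posM r s | sp σ e b \in posM r s) at_xQ k b
  - \sum_(b <- posH r s | sp σ e b \in posH r s) at_xQ k b
  = \sum_(i < r) bz ((i < k)%N && ~~ e i).
Proof.
move=> ks hg.
rewrite big_mkcond [X in _ - X]big_mkcond sum_posM sum_posG sum_posH.
rewrite [X in _ - (_ + _ + X)]big1_seq; last first.
  by move=> b /andP [_ hb]; rewrite (posH4_at ks hb); case: ifP.
rewrite addr0 opprD addrA.
set X := fun i : 'I_r => (if char_at_tau s (neps false i + neps false i) == 1 then
   (if sp σ e (neps false i + neps false i) \in posM r s
    then at_xQ k (neps false i + neps false i) else 0) else 0).
rewrite (@sumsum_sub _ _ _ X); last first.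
  move=> i j.
  case: (ltngtP i j) => [ij|ji|/val_inj ij]; last first.
  - by subst j; rewrite eqxx /X /=; lia.
  - rewrite (_ : (i == j) = false); first by rewrite /=; lia.
    by apply/negbTE/eqP => h; move: ji; rewrite h ltnn.
  have ijF : (i == j) = false by apply/negbTE/eqP => h; move: ij; rewrite h ltnn.
  have ij' : i != j by apply/eqP => h; rewrite h ltnn in ij.
  suff key : forall x, (if char_at_tau s (neps false i + neps x j) == 1 then
      (if sp σ e (neps false i + neps x j) \in posM r s
       then at_xQ k (neps false i + neps x j) else 0) else 0) =
      (if (j < s)%N then (if sp σ e (neps false i + neps x j) \in posH r s
       then at_xQ k (neps false i + neps x j) else 0) else 0).
    by rewrite (key true) (key false) ijF !andTb subrr.
  move=> x; rewrite char_pair memM_pair //.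
  case: (ltnP j s) => js.
    have is_ : (i < s)%N by apply: ltn_trans ij js.
    by rewrite is_ andbT memH_pair.
  case: (ltnP i s) => is_.
    by [].
  have ik : (i < k)%N = false by apply/negbTE; rewrite -leqNgt; apply: leq_trans is_.
  have jk : (j < k)%N = false by apply/negbTE; rewrite -leqNgt; apply: leq_trans js.
  by rewrite at_pair /bz ik jk; case: ifP.
rewrite -sumrB; apply: eq_bigr => i _.
rewrite /X char_pair eqxx memM_pair // eqxx andbT memG_diag at_pair.
case: (ltnP i s) => is_.
  rewrite memH_single' // at_neps /bz /sg.
  by case: (e i); case: (i < k)%N.
have ik : (i < k)%N = false by apply/negbTE; rewrite -leqNgt; apply: leq_trans is_.
by rewrite /bz ik; case: (e i).
Qed.

Definition Kf r s k (f : weight r -> weight r) (b : weight r) : int :=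
  bz (at_xQ k b != 0) - bz ((char_at_tau s b == 1) && (at_xQ k b != 0))
  - (bz (f b \notin posG r) - bz ((char_at_tau s b == 1) && (f b \notin posM r s))).

Lemma size_levi r k (R : seq (weight r)) :
  (size R)%:Z - (size (levi k R))%:Z = (count (fun b => at_xQ k b != 0) R)%:Z.
Proof.
rewrite /levi size_filter -(count_predC (fun b => at_xQ k b == 0) R) PoszD.
have -> : count (predC (fun b : weight r => at_xQ k b == 0)) R = count (fun b => at_xQ k b != 0) R by apply: eq_count.
lia.
Qed.

Lemma E_sum r s k (f : weight r -> weight r) :
  (dimGP r k - dimMQ r s k) - ((lengthW (posG r) f)%:Z - (lengthW (posM r s) f)%:Z)
  = \sum_(b <- posG r) Kf s k f b.
Proof.
rewrite /dimGP /dimMQ !size_levi /lengthW /posM !count_filter !count_int.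
rewrite /Kf -!sumrB; apply: eq_bigr => b _; rewrite /predI /=.
by congr (_ - _ - (bz _ - bz _)); rewrite andbC.
Qed.

Lemma K_same r s k (σ : {perm 'I_r}) e x (i j : 'I_r) : good s σ ->
  (i < s)%N = (j < s)%N -> Kf s k (sp σ e) (neps false i + neps x j) = 0.
Proof.
move=> hg h; rewrite /Kf char_pair memM_pair // h eqxx !andbT /=.
lia.
Qed.

Lemma K_mixed r s k (σ : {perm 'I_r}) e x (i j : 'I_r) : (k <= s)%N -> good s σ ->
  (i < s)%N -> (s <= j)%N ->
  Kf s k (sp σ e) (neps false i + neps x j) = bz (i < k)%N - bz (e i).
Proof.
move=> ks hg is_ sj.
have ij : i != j by apply/eqP => h; move: is_; rewrite h ltnNge sj.
have jsF : (j < s)%N = false by rewrite ltnNge sj.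
rewrite /Kf char_pair is_ jsF /= memG_pair //.
rewrite (_ : (σ i < σ j)%N); last by apply: (@leq_trans s); rewrite ?hg // leqNgt hg jsF.
rewrite at_pair (_ : (j < k)%N = false); last by apply/negbTE; rewrite -leqNgt (leq_trans ks sj).
by rewrite /bz; case: (i < k)%N; case: (e i).
Qed.

Lemma sum_ge r s (c : int) :
  \sum_(j < r) (if (s <= j)%N then c else 0) = (r - s)%N%:Z * c.
Proof.
elim: r => [|r IH]; first by rewrite big_ord0 sub0n mul0r.
rewrite big_ord_recr /= IH.
case: (leqP s r) => sr.
  by rewrite subSn // -addn1 PoszD mulrDl mul1r.
have -> : (r.+1 - s)%N = 0%N by apply/eqP; rewrite subn_eq0.
have -> : (r - s)%N = 0%N by apply/eqP; rewrite subn_eq0 ltnW.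
by rewrite mul0r add0r.
Qed.

Lemma E_closed r s k (σ : {perm 'I_r}) e : (k <= s)%N -> good s σ ->
  \sum_(b <- posG r) Kf s k (sp σ e) b =
  \sum_(i < r) (if (i < s)%N then 2 * (r - s)%N%:Z * (bz (i < k)%N - bz (e i)) else 0).
Proof.
move=> ks hg; rewrite sum_posG; apply: eq_bigr => i _.
set d := bz (i < k)%N - bz (e i).
rewrite (eq_bigr (fun j : 'I_r => if (i < s)%N && (s <= j)%N then 2 * d else 0)); last first.
  move=> j _.
  case: (boolP ((i < s)%N && (s <= j)%N)) => [/andP [is_ sj]|hn].
    have ij : (i < j)%N by apply: leq_trans sj.
    by rewrite ij (ltnW ij) !K_mixed // -/d; lia.
  case: (ltngtP i j) => [ij|ji|/val_inj ij].
  - have hs : (i < s)%N = (j < s)%N.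
      case: (ltnP i s) hn => [is_|si] /=.
        by rewrite -ltnNge => ->.
      by move=> _; apply/esym/negbTE; rewrite -leqNgt (leq_trans si (ltnW ij)).
    by rewrite !K_same //; lia.
  - by [].
  - by subst j; rewrite K_same.
case: (ltnP i s) => is_ /=.
  by rewrite sum_ge; ring.
by rewrite big1.
Qed.

Definition Ue r s (σ : {perm 'I_r}) (e : 'I_r -> bool) (i j : 'I_r) : int :=
  (if (i < j)%N && ((i < s)%N == (j < s)%N) then
     (if (σ i < σ j)%N then 2 * bz (e i) else 1) else 0)
  + (if i == j then bz (e i) else 0).

Lemma lengthM_closed r s (σ : {perm 'I_r}) e : good s σ ->
  (lengthW (posM r s) (sp σ e))%:Z = \sum_(i < r) \sum_(j < r) Ue s σ e i j.
Proof.
move=> hg; rewrite /lengthW count_int sum_posM sum_posG.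
apply: eq_bigr => i _; apply: eq_bigr => j _.
rewrite /Ue !char_pair.
case: (ltngtP i j) => [ij|ji|/val_inj ij].
- have ijn : i != j by apply/eqP => h; move: ij; rewrite h ltnn.
  rewrite (negbTE ijn) addr0 andTb.
  case: eqP => hb; last by [].
  rewrite !memM_pair // hb eqxx !andbT !memG_pair //.
  by case: ifP => _; rewrite /bz; case: (e i); case: (e j).
- by rewrite /= (_ : (i == j) = false) //; apply/negbTE/eqP => h; move: ji; rewrite h ltnn.
- subst j; rewrite memM_pair // !eqxx andbT memG_diag /= /bz.
  by case: (e i).
Qed.

Lemma Ue_flip r s (σ : {perm 'I_r}) (e : 'I_r -> bool) (m i j : 'I_r) : e m ->
  Ue s σ (fun u => e u (+) (u == m)) i j + bz ((i == m) && (j == m)) <= Ue s σ e i j.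
Proof.
move=> em; rewrite /Ue.
case: (eqVneq i m) => [->|im].
  rewrite em /=.
  case: (eqVneq j m) => [->|jm]; first by rewrite ltnn.
  by case: ifP => _ //; case: ifP.
rewrite addbF /= /bz addr0.
by case: ifP => _; try case: ifP => _; lia.
Qed.

Lemma sum_ind r (m : 'I_r) : \sum_(i < r) \sum_(j < r) bz ((i == m) && (j == m)) = 1.
Proof.
rewrite (bigD1 m) // /= [X in _ + X]big1 => [|i im]; last first.
  by rewrite big1 // => j _; rewrite (negbTE im).
rewrite addr0 (bigD1 m) // /= [X in _ + X]big1 => [|j jm]; last by rewrite eqxx (negbTE jm).
by rewrite eqxx.
Qed.

Lemma sp_ext r (σ : {perm 'I_r}) e1 e2 (l : weight r) :
  (forall u, e1 u = e2 u) -> sp σ e1 l = sp σ e2 l.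
Proof. by move=> h; apply/ffunP => t; rewrite !spE h. Qed.

Lemma min_e r s k (σ : {perm 'I_r}) e (f : weight r -> weight r) :
  good s σ -> f =1 sp σ e ->
  (forall v, inWeyl (levi k (posM r s)) v ->
     (lengthW (posM r s) f <= lengthW (posM r s) (f \o v))%N) ->
  forall m : 'I_r, (k <= m)%N -> (m < s)%N -> e m = false.
Proof.
move=> hg hf hmin m km ms; apply/negP => em.
set α := neps false m + neps false m.
have hα : α \in levi k (posM r s).
  rewrite mem_filter; apply/andP; split.
    rewrite at_pair /bz ifF //; apply/negbTE; rewrite -leqNgt //.
  by rewrite mem_filter char_pair eqxx /= memG1.
have H : inWeyl (levi k (posM r s)) (refl α).
  by exists [:: α]; split; [rewrite /= hα | by []].
move: (hmin (refl α) H) => {H}.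
set e' := fun u => e u (+) (u == m).
have e1 : lengthW (posM r s) f = lengthW (posM r s) (sp σ e).
  by apply: eq_count => b; rewrite /= hf.
have e2 : lengthW (posM r s) (f \o refl α) = lengthW (posM r s) (sp σ e').
  apply: eq_count => b; rewrite /= hf refl_diag sp_comp mul1g.
  by rewrite (@sp_ext _ _ _ e') // => u; rewrite perm1.
rewrite e1 e2 => hle.
have ineq : (lengthW (posM r s) (sp σ e'))%:Z + 1 <= (lengthW (posM r s) (sp σ e))%:Z.
  rewrite !lengthM_closed // -(sum_ind m) -big_split /=.
  apply: ler_sum => i _; rewrite -big_split /=; apply: ler_sum => j _.
  exact: Ue_flip.
lia.
Qed.

Lemma at0 r k : at_xQ k (0 : weight r) = 0.
Proof. by rewrite /at_xQ big1 // => i _; rewrite zerowE. Qed.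

Lemma atN r k (u : weight r) : at_xQ k (- u) = - at_xQ k u.
Proof. by rewrite /at_xQ -sumrN; apply: eq_bigr => i _; rewrite oppwE. Qed.

Lemma atB r k (u v : weight r) : at_xQ k (u - v) = at_xQ k u - at_xQ k v.
Proof. by rewrite atD atN. Qed.

Lemma at_big r k I (s : seq I) (P : pred I) (F : I -> weight r) :
  at_xQ k (\sum_(x <- s | P x) F x) = \sum_(x <- s | P x) at_xQ k (F x).
Proof. exact: (big_morph (at_xQ k) (@atD r k) (at0 r k)). Qed.

Lemma drop_levi r k (R R' : seq (weight r)) (P : pred (weight r)) :
  {subset R <= R'} ->
  \sum_(b <- R | (b \notin levi k R') && P b) at_xQ k b = \sum_(b <- R | P b) at_xQ k b.
Proof.
move=> sub; rewrite big_mkcond [RHS]big_mkcond; apply: eq_big_seq => b hb /=.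
rewrite mem_filter sub // andbT.
by case: eqP => [->|_] /=; case: (P b).
Qed.

Lemma cM_eq r s k (f : weight r -> weight r) :
  at_xQ k (chiW (posM r s) (levi k (posG r)) f) =
  \sum_(b <- posM r s | f b \in posM r s) at_xQ k b.
Proof.
rewrite /chiW at_big drop_levi // => b; rewrite mem_filter => /andP [].
by [].
Qed.

Lemma cH_eq r s k (f : weight r -> weight r) :
  at_xQ k (chiW (posH r s) (levi k (posH r s)) f) =
  \sum_(b <- posH r s | f b \in posH r s) at_xQ k b.
Proof. by rewrite /chiW at_big drop_levi. Qed.

Definition cdf r s k (f : weight r -> weight r) : int :=
  at_xQ k (chiW (posM r s) (levi k (posG r)) f)
  - at_xQ k (chiW (posH r s) (levi k (posH r s)) f).

Lemma per_w r s k (σ : {perm 'I_r}) e (f : weight r -> weight r) :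
  (k <= s)%N -> (s <= r)%N -> good s σ -> f =1 sp σ e ->
  (forall m : 'I_r, (k <= m)%N -> (m < s)%N -> e m = false) ->
  codimG k f - codimM s k f = 2 * (r - s)%N%:Z * cdf s k f.
Proof.
move=> ks sr hg hf he.
have l1 : lengthW (posG r) f = lengthW (posG r) (sp σ e).
  by apply: eq_count => b; rewrite /= hf.
have l2 : lengthW (posM r s) f = lengthW (posM r s) (sp σ e).
  by apply: eq_count => b; rewrite /= hf.
have -> : codimG k f - codimM s k f =
    (dimGP r k - dimMQ r s k) - ((lengthW (posG r) f)%:Z - (lengthW (posM r s) f)%:Z).
  by rewrite /codimG /codimM; lia.
rewrite l1 l2 E_sum E_closed //.
rewrite /cdf cM_eq cH_eq.
rewrite (eq_bigl (fun b => sp σ e b \in posM r s)); last by move=> b; rewrite hf.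
rewrite [X in _ = _ * (_ - X)](eq_bigl (fun b => sp σ e b \in posH r s)); last by move=> b; rewrite hf.
rewrite cdiff // mulr_sumr; apply: eq_bigr => i _.
case: (ltnP i s) => is_.
  case: (ltnP i k) => ik.
    by rewrite /bz /=; case: (e i); rewrite /=; ring.
  by rewrite he // /bz ltnNge ik /=; lia.
have ik : (i < k)%N = false by apply/negbTE; rewrite -leqNgt (leq_trans ks is_).
by rewrite ik /bz /=; lia.
Qed.

Lemma length_id r (R : seq (weight r)) : lengthW R id = 0%N.
Proof.
rewrite /lengthW (@eq_in_count _ _ pred0) ?count_pred0 // => b hb /=.
by rewrite hb.
Qed.

Theorem mainTheorem10 (r s k n : nat) (hk : (1 <= k)%N) (hks : (k <= s)%N)
  (hsr : (s < r)%N) (ws : 'I_n -> weight r -> weight r)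
  (hws : forall i : 'I_n, @minRepMQ r s k (ws i)) :
  ((@thetaM r s k n ws - @thetaH r s k n ws)%:~R : rat)
  = (@expdimG r k n ws - @expdimM r s k n ws)%:~R / (2 * (r - s))%:R.
Proof.
have sr : (s <= r)%N by apply: ltnW.
set c : int := 2 * (r - s)%N%:Z.
have hx : forall i, codimG k (ws i) - codimM s k (ws i) = c * cdf s k (ws i).
  move=> i; case: (hws i) => hW hmin.
  case: (inWeyl_sp hW) => σ [e [hg hf]].
  apply: (per_w hks sr hg hf).
  exact: (min_e hg hf hmin).
have hid : codimG k (@id (weight r)) - codimM s k (@id (weight r)) = c * cdf s k (@id (weight r)).
  have h1 : (@id (weight r)) =1 sp 1%g (fun _ => false) by move=> x; rewrite sp_id.
  by apply: (per_w hks sr (good1 s) h1).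
have dim : dimGP r k - dimMQ r s k = codimG k (@id (weight r)) - codimM s k (@id (weight r)).
  by rewrite /codimG /codimM !length_id subr0 subr0.
have hT : thetaM s k ws - thetaH s k ws = cdf s k (@id (weight r)) - \sum_(i < n) cdf s k (ws i).
  rewrite /thetaM /thetaH !atB [at_xQ k (\sum_(i < n) _)]at_big [at_xQ k (\sum_(i < n) _)]at_big /cdf sumrB; ring.
have hE : expdimG k ws - expdimM s k ws = c * (thetaM s k ws - thetaH s k ws).
  rewrite hT mulrBr mulr_sumr -hid.
  rewrite (eq_bigr (fun i => codimG k (ws i) - codimM s k (ws i))); last by move=> i _; rewrite hx.
  rewrite sumrB /expdimG /expdimM -dim; ring.
rewrite hE intrM.
have -> : (c%:~R : rat) = (2 * (r - s))%:R.
  by rewrite /c -PoszM -pmulrn.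
rewrite mulrAC divff ?mul1r // pnatr_eq0 muln_eq0 subn_eq0 /= -ltnNge; exact: hsr.
Qed.
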